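(* Let $m\ge2$, $n\ge1$. An $m$-uniform multi-hypergraph $\mathcal{P}=([n],\mathbb{E})$ is a cp multi-hypergraph if and only if it has Property R.
   Context: $S(m,n)=\{(i_1,\dots,i_m): i_k\in[n]\}$. For a tuple or multiset $\eta=\{i_1,\dots,i_m\}$, its base $B(\eta)$ is the set of distinct elements among $i_1,\dots,i_m$, and $M(\eta)$ is the multiset formed by the entries of a tuple $\eta$. An $m$-uniform multi-hypergraph on $[n]$ is a pair $([n],\mathbb{E})$ with $\mathbb{E}$ a set of multisets of elements of $[n]$, each of cardinality $m$ counting repetitions. A symmetric real tensor $\mathcal{A}=(a_{i_1\cdots i_m})$ of order $m$ and dimension $n$ is an associated tensor of $\mathcal{P}$ if for every $(i_1,\dots,i_m)\in S(m,n)$, $a_{i_1\cdots i_m}\neq0$ when the multiset $\{i_1,\dots,i_m\}\in\mathbb{E}$ and $a_{i_1\cdots i_m}=0$ otherwise. For $\mathbf{u}\in\mathbb{R}^n$, $\mathbf{u}^m$ is the tensor with entries $u_{i_1}\cdots u_{i_m}$. A symmetric tensor $\mathcal{A}$ is $\{0,1\}$-cp if $\mathcal{A}=\sum_{j=1}^q\mathbf{u}_j^m$ for some $q\ge1$ and $\mathbf{u}_j\in\{0,1\}^n$ (such a tensor need not have entries in $\{0,1\}$). $\mathcal{P}$ is a cp multi-hypergraph if it has an associated tensor that is $\{0,1\}$-cp. For $\alpha\in\mathbb{E}$, $\mathcal{D}_\alpha=\{\eta\in S(m,n): B(\eta)\subseteq B(\alpha)\}$; $\mathcal{P}$ has Property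 R if for every $\alpha\in\mathbb{E}$ and every $\eta\in\mathcal{D}_\alpha$, the multiset $M(\eta)$ belongs to $\mathbb{E}$. *)

(* Defs.v *)
From HB Require Import structures.
From mathcomp Require Import all_boot all_order all_algebra.
Set Implicit Arguments. Unset Strict Implicit. Unset Printing Implicit Defensive.
Import Order.TTheory GRing.Theory Num.Theory.

Definition mset (n : nat) := {ffun 'I_n -> nat}.

Definition mcard n (a : mset n) : nat := \sum_(i < n) a i.

Definition Mof m n (eta : m.-tuple 'I_n) : mset n := [ffun i => count_mem i eta].

Definition Bm n (a : mset n) : pred 'I_n := fun i => (0 < a i)%N.

Definition Bt m n (eta : m.-tuple 'I_n) : pred 'I_n := fun i => i \in eta.

Definition uniform_mhg (m n : nat) (E : pred (mset n)) : Prop :=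
  forall a, E a -> mcard a = m.

Definition tensor (R : Type) (m n : nat) := m.-tuple 'I_n -> R.

Definition symmetric_tensor (R : Type) m n (A : tensor R m n) : Prop :=
  forall s t : m.-tuple 'I_n, perm_eq s t -> A s = A t.

Definition associated_tensor (R : nzRingType) m n (E : pred (mset n)) (A : tensor R m n) : Prop :=
  symmetric_tensor A /\
  forall t : m.-tuple 'I_n, (A t != 0)%R <-> E (Mof t).

Definition tpow (R : nzRingType) m n (u : 'I_n -> R) : tensor R m n :=
  fun t => (\prod_(k < m) u (tnth t k))%R.

Definition zo_cp (R : nzRingType) m n (A : tensor R m n) : Prop :=
  exists q : nat, (1 <= q)%N /\
  exists u : 'I_q -> 'I_n -> R,
    (forall j i, (u j i = 0 \/ u j i = 1)%R) /\
    forall t, (A t = \sum_(j < q) tpow (u j) t)%R.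

Definition cp_mhg (R : nzRingType) m n (E : pred (mset n)) : Prop :=
  exists A : tensor R m n, associated_tensor E A /\ zo_cp A.

Definition propertyR m n (E : pred (mset n)) : Prop :=
  forall a, E a -> forall eta : m.-tuple 'I_n,
    {subset Bt eta <= Bm a} -> E (Mof eta).

(* Main.v *)
Require Import Defs.
From mathcomp Require Import all_boot all_order all_algebra.
Set Implicit Arguments. Unset Strict Implicit. Unset Printing Implicit Defensive.
Import Order.TTheory GRing.Theory Num.Theory.

Lemma mset_tuple m n (a : mset n) : mcard a = m -> exists t : m.-tuple 'I_n, Mof t = a.
Proof.
move=> ha.
pose s := flatten [seq nseq (a i) i | i <- enum 'I_n].
have cnt x : count_mem x s = a x.
  rewrite /s count_flatten -map_comp sumnE big_map.
  rewrite (eq_bigr (fun i => (i == x) * a i)); last by move=> i _; rewrite /= count_nseq mulnC.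
  rewrite big_enum /= (bigD1 x) //= eqxx mul1n big1 ?addn0 //.
  by move=> i /negbTE ->.
have sz : size s == m.
  rewrite -ha /s size_flatten /shape -map_comp sumnE big_map big_enum /mcard /=.
  by apply/eqP/eq_bigr => i _; rewrite size_nseq.
exists (Tuple sz); apply/ffunP => x; by rewrite /Mof ffunE /= cnt.
Qed.

Lemma BtBm m n (t : m.-tuple 'I_n) i : Bt t i = Bm (Mof t) i.
Proof. by rewrite /Bt /Bm ffunE -has_count has_pred1. Qed.

Lemma tpow_perm (R : comNzRingType) m n (u : 'I_n -> R) (s t : m.-tuple 'I_n) :
  perm_eq s t -> tpow u s = tpow u t.
Proof.
move=> p; rewrite /tpow.
rewrite -(big_tuple _ _ s xpredT u) -(big_tuple _ _ t xpredT u).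
exact: perm_big.
Qed.

Lemma tpow01 (R : comNzRingType) m n (u : 'I_n -> R) (t : m.-tuple 'I_n) :
  (forall i, u i = 0 \/ u i = 1)%R ->
  tpow u t = if [forall k, u (tnth t k) == 1%R] then 1%R else 0%R.
Proof.
move=> h01; rewrite /tpow; case: ifP => [/forallP H|/negbT].
  by apply: big1 => k _; apply/eqP.
rewrite negb_forall => /existsP [k hk].
rewrite (bigD1 k) //=; case: (h01 (tnth t k)) => e; last by rewrite e eqxx in hk.
by rewrite e mul0r.
Qed.

Lemma sum01 (R : realFieldType) q m n (u : 'I_q -> 'I_n -> R) (t : m.-tuple 'I_n) :
  (forall j i, u j i = 0 \/ u j i = 1)%R ->
  ((\sum_(j < q) tpow (u j) t) != 0)%R = [exists j, [forall k, u j (tnth t k) == 1%R]].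
Proof.
move=> h01.
rewrite psumr_eq0; last by move=> j _; rewrite tpow01 //; case: ifP.
rewrite -has_predC; apply/hasP/existsP.
  move=> [j _ /=]; rewrite tpow01 //; case: ifP => [/forallP H _|]; last by rewrite eqxx.
  by exists j; apply/forallP.
move=> [j H]; exists j; first exact: mem_index_enum.
by rewrite /= tpow01 // H oner_eq0.
Qed.

Theorem mainTheorem6 (R : realFieldType) (m n : nat) (hm : (2 <= m)%N) (hn : (1 <= n)%N)
  (E : pred (mset n)) (hE : uniform_mhg m E) :
  cp_mhg R m E <-> propertyR m E.
Proof.
split.
  move=> [A [[Asym Anz] [q [_ [u [h01 Au]]]]]] a Ea eta sub.
  have [t ta] := mset_tuple (hE a Ea).
  have : (A t != 0)%R by apply/Anz; rewrite ta.
  rewrite Au sum01 // => /existsP [j /forallP Hj].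
  apply/Anz; rewrite Au sum01 //; apply/existsP; exists j; apply/forallP => k.
  have : Bt t (tnth eta k).
    by rewrite BtBm ta; apply: sub; rewrite /Bt mem_tnth.
  rewrite /Bt => /tnthP [k' ->]; exact: Hj.
move=> PR.
pose T := {: m.-tuple 'I_n}.
pose q := #|T|.
pose w (t : m.-tuple 'I_n) (i : 'I_n) : R := ((E (Mof t)) && (i \in t))%:R%R.
pose u (j : 'I_q) := w (enum_val j).
have h01 : forall j i, (u j i = 0 \/ u j i = 1)%R.
  by move=> j i; rewrite /u /w; case: (_ && _); [right|left].
exists (fun s => \sum_(j < q) tpow (u j) s)%R; split; last first.
  exists q; split; last by exists u.
  by rewrite /q card_tuple card_ord expn_gt0 hn.
split.
  by move=> s t p; apply: eq_bigr => j _; apply: tpow_perm.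
move=> s; rewrite sum01 //; split.
  move=> /existsP [j /forallP Hj].
  have m0 : (0 < m)%N by apply: leq_trans hm.
  have := Hj (Ordinal m0); rewrite /u /w pnatr_eq1 eqb1 => /andP [Et _].
  apply: (PR _ Et) => i; rewrite /Bt => /tnthP [k ->].
  change (Bm (Mof (enum_val j)) (tnth s k)); rewrite -BtBm /Bt.
  by have := Hj k; rewrite /u /w pnatr_eq1 eqb1 => /andP [_ ->].
move=> Es; apply/existsP; exists (enum_rank s); apply/forallP => k.
by rewrite /u /w enum_rankK Es mem_tnth.
Qed.
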